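(* Let $\alpha=(\alpha_1,\ldots,\alpha_n)$ be a composition, $\sigma\in S_n$, and $i\in\{1,\ldots,n-1\}$ with $\alpha_i=\alpha_{i+1}$. Let $T\in\mathrm{NAF}(\alpha,\sigma)$ and $U\in\mathrm{F}(\alpha,\sigma s_i)$. If $P_i(T,U)\ne0$, then $U$ is non-attacking, i.e. $U\in\mathrm{NAF}(\alpha,\sigma s_i)$.
   Context: Permutations are in one-line notation; $\sigma s_i$ is $\sigma$ with the entries in positions $i,i+1$ exchanged. A composition is a sequence of nonnegative integers. The skyline diagram is $\mathrm{dg}(\alpha)=\{(j,r):1\le j\le n,\ 1\le r\le\alpha_j\}$ ($j$ = column, $r$ = row) and the augmented diagram is $\mathrm{adg}(\alpha)=\mathrm{dg}(\alpha)\cup\{(j,0):1\le j\le n\}$ (row $0$ is the basement). For $u=(j,r)\in\mathrm{dg}(\alpha)$: $\mathrm{leg}(u)=\alpha_j-r$; the left arm set is $\{(j',r-1)\in\mathrm{adg}(\alpha):j'<j,\ \alpha_{j'}<\alpha_j\}$, the right arm set is $\{(j',r)\in\mathrm{dg}(\alpha):j'>j,\ \alpha_{j'}\le\alpha_j\}$, $\mathrm{Arm}(u)$ is their union and $\mathrm{arm}(u)=|\mathrm{Arm}(u)|$. Two boxes of $\mathrm{adg}(\alpha)$ attack each other if they are in the same row, or in consecutive rows with the box in the higher row strictly to the right of the box in the lower row. A filling of shape $\alpha$ and basement $\tau\in S_n$ is a map $T:\mathrm{adg}(\alpha)\to\{1,\ldots,n\}$ with $T(j,0)=\tau_j$; $\mathrm{F}(\alpha,\tau)$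 is the set of these, and $\mathrm{NAF}(\alpha,\tau)$ the subset of non-attacking ones (attacking boxes have distinct entries). For integers $a,b$ let $\chi(a,b)=1$ if $a>b$ and $0$ otherwise, and $\chi(a,b,c)=\chi(a,b)+\chi(b,c)-\chi(a,c)$. Fix $i$ with $\alpha_i=\alpha_{i+1}$. For a filling $T$ and $0\le r\le\alpha_i$, $\mathrm{swap}_r(T)$ exchanges the entries of boxes $(i,r)$ and $(i+1,r)$, and $\Omega_{0,h}=\mathrm{swap}_h\circ\cdots\circ\mathrm{swap}_0$. For $T\in\mathrm{NAF}(\alpha,\tau)$ and $0\le r\le\alpha_i-1$, let $a=T(i,r)$, $b=T(i+1,r)$, $c=T(i,r+1)$, $d=T(i+1,r+1)$, $A=\mathrm{arm}(i+1,r+1)$, $\ell=\mathrm{leg}(i+1,r+1)$, and define $\rho_r(T)\in\mathbb{Q}(q,t)$: if $a,b,c,d$ are distinct, $\rho_r(T)=0$ when $\chi(c,d,a)=\chi(c,d,b)$ and $\rho_r(T)=1$ when $\chi(c,d,a)=\chi(d,c,b)$; if exactly three of them are distinct, then $\rho_r(T)=0$ if $b=c$, $\rho_r(T)=1$ if $b=d$, and $\rho_r(T)=t^{1-\chi(d,a,b)}\frac{1-q^{\ell+1}t^{A+1}}{1-q^{\ell+1}t^{A+2}}$ if $a=c$; if $a=c$ and $b=d$, $\rho_r(T)=1$. Also set $\rho_{\alpha_i}(T)=0$. For $T\in\mathrm{NAF}(\alpha,\tau)$ and $U\in\mathrm{F}(\alpha,\tau s_i)$, $P_i(T,U)=\left(\prod_{r=0}^{h-1}\rho_r(T)\right)(1-\rho_h(T))$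 if $U=\Omega_{0,h}(T)$ for some $h\in\{0,\ldots,\alpha_i\}$, and $P_i(T,U)=0$ otherwise. *)

(* Defs.v *)
From HB Require Import structures.
From mathcomp Require Import all_boot all_order all_algebra all_fingroup fraction.
Set Implicit Arguments. Unset Strict Implicit. Unset Printing Implicit Defensive.
Import Order.TTheory GRing.Theory Num.Theory.
Local Open Scope ring_scope.

(* Conventions: columns are 0-based, [j : 'I_n] stands for the paper's column
   j+1; rows are nat, row 0 is the basement; entries are in 'I_n, i.e. the
   paper's values 1..n shifted down by one (an order isomorphism). *)

(* The field Q(q,t) = Frac(Q[t][q]). *)
Definition QqtRing := {poly {poly rat}}.
Definition Qqt := {fraction QqtRing}.
Definition qv : Qqt := @FracField.tofrac QqtRing (('X : {poly rat})%:P).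
Definition tv : Qqt := @FracField.tofrac QqtRing 'X.

Section Defs.
Variable n : nat.
Variable alpha : 'I_n -> nat.

(* A filling: column -> row -> entry; only values on adg(alpha) matter. *)
Definition filling := 'I_n -> nat -> 'I_n.

Definition in_adg (j : 'I_n) (r : nat) : bool := (r <= alpha j)%N.

Definition is_filling (tau : 'S_n) (T : filling) : Prop :=
  forall j : 'I_n, T j 0%N = tau j.

Definition attack (j : 'I_n) (r : nat) (j' : 'I_n) (r' : nat) : bool :=
  [|| r == r',
      (r' == r.+1) && (j < j')%N
    | (r == r'.+1) && (j' < j)%N].

Definition NAF (tau : 'S_n) (T : filling) : Prop :=
  is_filling tau T /\
  forall (j : 'I_n) (r : nat) (j' : 'I_n) (r' : nat),
    in_adg j r -> in_adg j' r' -> (j, r) <> (j', r') ->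
    attack j r j' r' -> T j r <> T j' r'.

Definition leg (j : 'I_n) (r : nat) : nat := (alpha j - r)%N.

Definition left_arm (j : 'I_n) (r : nat) : {set 'I_n} :=
  [set j' : 'I_n | [&& (j' < j)%N, (alpha j' < alpha j)%N & (r.-1 <= alpha j')%N]].
Definition right_arm (j : 'I_n) (r : nat) : {set 'I_n} :=
  [set j' : 'I_n | [&& (j < j')%N, (alpha j' <= alpha j)%N & (1 <= r <= alpha j')%N]].
(* the left and right arm sets lie in rows r-1 and r respectively, hence are
   disjoint, so arm(u) = |left| + |right| *)
Definition arm (j : 'I_n) (r : nat) : nat := (#|left_arm j r| + #|right_arm j r|)%N.

Definition chi (a b : 'I_n) : int := ((b < a)%N : nat)%:Z.
Definition chi3 (a b c : 'I_n) : int := chi a b + chi b c - chi a c.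

(* fix the column i (0-based); ordS i is column i+1 when i+1 < n *)
Variable i : 'I_n.
Definition i1 : 'I_n := ordS i.

(* one-line sigma s_i : j |-> sigma (s_i j) *)
Definition sigma_si (sigma : 'S_n) : 'S_n := (tperm i i1 * sigma)%g.

Definition Omega (h : nat) (T : filling) : filling :=
  fun j r => if (r <= h)%N then
               (if j == i then T i1 r else if j == i1 then T i r else T j r)
             else T j r.

Definition rho (T : filling) (r : nat) : Qqt :=
  if (alpha i <= r)%N then 0 else
  let a := T i r in let b := T i1 r in
  let c := T i r.+1 in let d := T i1 r.+1 in
  let A := arm i1 r.+1 in let l := leg i1 r.+1 in
  if uniq [:: a; b; c; d] then
    (if chi3 c d a == chi3 c d b then 0
     else if chi3 c d a == chi3 d c b then 1 else 0)
  else if size (undup [:: a; b; c; d]) == 3%N then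
    (if b == c then 0
     else if b == d then 1
     else if a == c then
       tv ^ (1 - chi3 d a b) *
       ((1 - qv ^+ l.+1 * tv ^+ A.+1) / (1 - qv ^+ l.+1 * tv ^+ A.+2))
     else 0)
  else if (a == c) && (b == d) then 1
  else 0.

Definition agree (U V : filling) : bool :=
  [forall j : 'I_n, forall r : 'I_(alpha j).+1, U j r == V j r].

Definition Pi (T U : filling) : Qqt :=
  match [pick h : 'I_(alpha i).+1 | agree U (Omega h T)] with
  | Some h => (\prod_(r < h) rho T r) * (1 - rho T h)
  | None => 0
  end.

End Defs.

(* Main.v *)
Require Import Defs.
From HB Require Import structures.
From mathcomp Require Import all_boot all_order all_algebra all_fingroup fraction.
From mathcomp Require Import zify.
Import GRing.Theory.
Local Open Scope ring_scope.

Definition sw {n} (i : 'I_n) (j : 'I_n) : 'I_n :=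
  if j == i then i1 i else if j == i1 i then i else j.

Lemma i1_val {n} {i : 'I_n} : (i.+1 < n)%N -> val (i1 i) = i.+1.
Proof. by move=> h; rewrite /= modn_small. Qed.

Lemma sw_val {n} (i : 'I_n) (k : 'I_n) : (i.+1 < n)%N ->
  val (sw i k) = if val k == val i then i.+1 else if val k == i.+1 then val i else val k.
Proof.
move=> h; rewrite /sw -!val_eqE /= (modn_small h).
by case: ifP => _ /=; [rewrite (modn_small h)|case: ifP].
Qed.

Lemma sw_inv {n} (i : 'I_n) j : (i.+1 < n)%N -> sw i (sw i j) = j.
Proof.
move=> h; have hne : i1 i != i by rewrite -val_eqE /= modn_small //; lia.
rewrite /sw; case: (eqVneq j i) => [->|h1].
  by rewrite (negbTE hne) ?eqxx.
case: (eqVneq j (i1 i)) => [->|h2]; first by rewrite ?eqxx.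
by rewrite (negbTE h1) (negbTE h2).
Qed.

Lemma alpha_sw {n} (alpha : 'I_n -> nat) (i : 'I_n) j :
  alpha i = alpha (i1 i) -> alpha (sw i j) = alpha j.
Proof.
move=> Ha; rewrite /sw; case: eqP => [->|_] //; case: eqP => [->|_] //.
Qed.

Lemma sw_lt {n} (i : 'I_n) (j j' : 'I_n) : (i.+1 < n)%N -> (j < j')%N ->
  (sw i j' <= sw i j)%N -> j = i /\ j' = i1 i.
Proof.
move=> h; rewrite !sw_val // => H1 H2.
have [E1 E2] : val j = val i /\ val j' = i.+1.
  move: H1 H2; repeat (case: ifP => [/eqP ?|/negbT/eqP ?]); intros; simpl in *; lia.
by split; apply: val_inj; rewrite ?E1 ?E2 ?(i1_val h).
Qed.

Lemma sw_le {n} (i : 'I_n) (j j' : 'I_n) : (i.+1 < n)%N -> (j < j')%N ->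
  (j' <= sw i j)%N -> j = i /\ j' = i1 i.
Proof.
move=> h; rewrite !sw_val // => H1 H2.
have [E1 E2] : val j = val i /\ val j' = i.+1.
  move: H1 H2; repeat (case: ifP => [/eqP ?|/negbT/eqP ?]); intros; simpl in *; lia.
by split; apply: val_inj; rewrite ?E1 ?E2 ?(i1_val h).
Qed.

Lemma Omega_sw {n} (i : 'I_n) h T j r :
  Omega i h T j r = if (r <= h)%N then T (sw i j) r else T j r.
Proof. by rewrite /Omega /sw; case: ifP => //; case: ifP => //; case: ifP. Qed.

Lemma attack_sym {n} (j : 'I_n) r j' r' : attack j r j' r' = attack j' r' j r.
Proof. by rewrite /attack eq_sym [X in _ || X]orbC. Qed.

Section Rho.
Variables (n : nat) (alpha : 'I_n -> nat) (sigma : 'S_n) (i : 'I_n) (T : filling n).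
Hypothesis Hn : (i.+1 < n)%N.
Hypothesis Ha : alpha i = alpha (i1 i).
Hypothesis HT : forall (j : 'I_n) (r : nat) (j' : 'I_n) (r' : nat),
    in_adg alpha j r -> in_adg alpha j' r' -> (j, r) <> (j', r') ->
    attack j r j' r' -> T j r <> T j' r'.

Lemma i1_neq : i1 i != i.
Proof. by rewrite -val_eqE /= modn_small //; lia. Qed.

Lemma facts {r} : (r < alpha i)%N ->
  [/\ T i r != T (i1 i) r, T i r.+1 != T (i1 i) r.+1 & T i r != T (i1 i) r.+1].
Proof.
move=> hr.
have hne : i <> i1 i by move=> E; move: i1_neq; rewrite -E eqxx.
have hlt : (i < i1 i)%N by rewrite i1_val.
split; apply/eqP; apply: HT; rewrite /in_adg -?Ha ?(ltnW hr) //;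
  try (by case); by rewrite /attack ?eqxx ?hlt ?orbT.
Qed.

Lemma rho_bc r : (r < alpha i)%N -> T (i1 i) r = T i r.+1 -> rho alpha i T r = 0.
Proof.
move=> hr E; have [hab hcd had] := facts hr.
rewrite /rho leqNgt hr /= -E.
move: hab hcd had; rewrite -E.
set a := T i r; set b := T (i1 i) r; set d := T (i1 i) r.+1 => hab hbd had.
by rewrite /= !inE !eqxx /= (negbTE hab) (negbTE hbd) (negbTE had).
Qed.

Lemma rho_bd r : (r < alpha i)%N -> T (i1 i) r = T (i1 i) r.+1 -> rho alpha i T r = 1.
Proof.
move=> hr E; have [hab hcd had] := facts hr.
rewrite /rho leqNgt hr /= -E.
move: hab hcd had; rewrite -E.
set a := T i r; set b := T (i1 i) r; set c := T i r.+1 => hab hcb _.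
have hba : b != a by rewrite eq_sym.
have hbc : b != c by rewrite eq_sym.
rewrite /= !inE !eqxx /= ?orbT /= ?(negbTE hab) ?(negbTE hcb) ?(negbTE hbc) /=.
by rewrite orbF andbT andbF; case: (a == c).
Qed.

End Rho.

Theorem proposition3p6 (n : nat) (alpha : 'I_n -> nat) (sigma : 'S_n) (i : 'I_n) :
  (i.+1 < n)%N ->
  alpha i = alpha (i1 i) ->
  forall T U : filling n,
    NAF alpha sigma T ->
    is_filling (sigma_si i sigma) U ->
    Pi alpha i T U != 0 ->
    NAF alpha (sigma_si i sigma) U.
Proof.
move=> Hn Ha T U [_ HT] HU HPi; split => //.
have hne1 : i1 i != i by rewrite -val_eqE /= modn_small //; lia.
move: HPi; rewrite /Pi; case: pickP => [h Hag|_]; last by rewrite eqxx.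
rewrite mulf_eq0 negb_or => /andP[Hprod Hrh].
have Hrho : forall r, (r < h)%N -> rho alpha i T r != 0.
  move=> r hr; move/prodf_neq0: Hprod => /(_ (Ordinal hr)); by apply.
have hh : (h <= alpha i)%N by rewrite -ltnS.
have HUe : forall j r, (r <= alpha j)%N -> U j r = Omega i h T j r.
  move=> j r hr; move/forallP: Hag => /(_ j)/forallP.
  by move=> /(_ (Ordinal (n:=(alpha j).+1) (m:=r) hr))/eqP.
move=> j r j' r' hj hj' hne hat; rewrite !HUe //.
move: j r j' r' hj hj' hne hat.
suff main : forall j r j' r', (r <= r')%N -> in_adg alpha j r -> in_adg alpha j' r' ->
   (j, r) <> (j', r') -> attack j r j' r' -> Omega i h T j r <> Omega i h T j' r'.
  move=> j r j' r' hj hj' hne hat; case: (leqP r r') => hle.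
    exact: main.
  move=> E; apply: (main j' r' j r (ltnW hle)) => //.
  - by move=> [E1 E2]; apply: hne; rewrite E1 E2.
  - by rewrite attack_sym.
move=> j r j' r' hle hj hj' hne hat; rewrite !Omega_sw.
have hsne : (sw i j, r) <> (sw i j', r').
  move=> [E1 E2]; apply: hne; rewrite E2.
  by rewrite -(sw_inv i j Hn) E1 (sw_inv i j' Hn).
case: (leqP r' h) => hr'h.
  rewrite (leq_trans hle hr'h).
  case Hat': (attack (sw i j) r (sw i j') r').
    by apply: HT => //; rewrite /in_adg alpha_sw.
  move: hat Hat'; rewrite /attack.
  case: (eqVneq r r') => [->|hrr] /=; first by [].
  have -> : (r == r'.+1) = false by apply/negbTE; rewrite neq_ltn ltnS hle.
  rewrite /= !orbF => /andP[/eqP Er hjj] /negbT.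
  rewrite Er eqxx /= -leqNgt => hsw.
  have [-> ->] := sw_lt i j j' Hn hjj hsw.
  rewrite /sw eqxx (negbTE hne1) eqxx.
  move=> E; have hrh : (r < h)%N by rewrite -Er.
  move: (Hrho r hrh); rewrite (@rho_bc _ _ _ _ Hn Ha HT) ?eqxx //.
  exact: leq_trans hrh hh.
case: (leqP r h) => hrh; last by apply: HT.
move: hat; rewrite /attack.
have -> : (r == r') = false by apply/negbTE; rewrite neq_ltn (leq_ltn_trans hrh hr'h).
have -> : (r == r'.+1) = false by apply/negbTE; rewrite neq_ltn ltnS hle.
rewrite /= orbF => /andP[/eqP Er hjj]; subst r'.
case: (ltnP (sw i j) j') => hs.
  apply: HT => //; first by rewrite /in_adg alpha_sw.
    by move=> [_ /eqP]; rewrite eqn_leq ltnn andbF.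
  by rewrite /attack eqxx hs orbT.
have [Ej Ej'] := sw_le i j j' Hn hjj hs; subst j j'.
have Erh : r = h by lia.
subst r.
rewrite /sw eqxx => E.
move: Hrh; rewrite (@rho_bd _ _ _ _ Hn Ha HT) ?subrr ?eqxx //.
by move: hj'; rewrite /in_adg -Ha.
Qed.
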